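(* Let $\mathcal{G}$ and $\mathcal{H}$ be regular families of finite subsets of $\mathbb{N}$. Suppose $F_1<F_2<\dots<F_k$ are finite subsets of $\mathbb{N}$ with $\bigcup_{j=1}^kF_j\in\mathcal{G}[\mathcal{H}]$. If $F_j\notin\mathcal{H}$ for all $1\le j\le k$, then $\{\min F_1,\dots,\min F_k\}\in\mathcal{G}$.
   Context: For finite $E,F\subseteq\mathbb{N}$, $E<F$ means $\max E<\min F$. A family $\mathcal{F}$ of finite subsets of $\mathbb{N}$ is regular if it is hereditary (closed under subsets), spreading (if $\{n_1<\dots<n_k\}\in\mathcal{F}$ and $m_1<\dots<m_k$ with $m_i\ge n_i$, then $\{m_1,\dots,m_k\}\in\mathcal{F}$), and compact in $2^{\mathbb{N}}$ (product topology). A sequence $E_1<\dots<E_k$ is $\mathcal{M}$-admissible if $\{\min E_1,\dots,\min E_k\}\in\mathcal{M}$. For regular $\mathcal{M},\mathcal{N}$, $\mathcal{M}[\mathcal{N}]=\{\bigcup_{i=1}^kF_i: F_i\in\mathcal{N}\text{ for all }i,\ \{F_1,\dots,F_k\}\text{ is }\mathcal{M}\text{-admissible}\}$. *)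

(* Defs.v *)
From HB Require Import structures.
From mathcomp Require Import all_boot.
From mathcomp Require Import finmap.
Set Implicit Arguments. Unset Strict Implicit. Unset Printing Implicit Defensive.
Local Open Scope fset_scope.

Definition set_family := {fset nat} -> Prop.

Definition enum_inc (E : {fset nat}) : seq nat := sort leq E.

(* min E (only used for nonempty E; defaults to 0 on the empty set) *)
Definition fmin (E : {fset nat}) : nat := head 0 (enum_inc E).

Definition fset_lt (E F : {fset nat}) : Prop :=
  E != fset0 /\ F != fset0 /\ forall x y, x \in E -> y \in F -> x < y.

Definition hereditary (F : set_family) : Prop :=
  forall E E' : {fset nat}, E' `<=` E -> F E -> F E'.

Definition spreading (F : set_family) : Prop :=
  forall E E' : {fset nat}, F E -> #|` E'| = #|` E| ->
    (forall i, i < #|` E| -> nth 0 (enum_inc E) i <= nth 0 (enum_inc E') i) ->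
    F E'.

(* closedness (equivalently compactness) of F, seen as a subset of 2^N with
   the product topology: every point A of 2^N all of whose basic
   neighbourhoods (determined by A on {0,...,n-1}) meet F, is in F. *)
Definition compact_family (F : set_family) : Prop :=
  forall A : nat -> bool,
    (forall n, exists E, F E /\ forall i, i < n -> (i \in E) = A i) ->
    exists E, F E /\ forall i, (i \in E) = A i.

Definition regular (F : set_family) : Prop :=
  hereditary F /\ spreading F /\ compact_family F.

Definition successive (s : seq {fset nat}) : Prop :=
  (forall E, E \in s -> E != fset0) /\
  (forall i j, i < j < size s -> fset_lt (nth fset0 s i) (nth fset0 s j)).

Definition mins (s : seq {fset nat}) : {fset nat} := [fset x | x in map fmin s].

Definition admissible (M : set_family) (s : seq {fset nat}) : Prop :=
  successive s /\ M (mins s).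

Definition bigunion (s : seq {fset nat}) : {fset nat} :=
  \bigcup_(E <- s) E.

Definition compose (M N : set_family) : set_family :=
  fun U => exists s : seq {fset nat},
    (forall E, E \in s -> N E) /\ admissible M s /\ U = bigunion s.

(* Main.v *)
Require Import Defs.
From HB Require Import structures.
From mathcomp Require Import all_boot finmap.
Local Open Scope fset_scope.

Lemma fmin_mem (E : {fset nat}) : E != fset0 -> fmin E \in E.
Proof.
move=> hE; rewrite /fmin /enum_inc.
case e: (sort leq E) => [|a l] /=.
  have : size (sort leq E) = 0 by rewrite e.
  rewrite size_sort => /eqP; rewrite -/(#|` E|) cardfs_eq0 => h; by rewrite h in hE.
by rewrite -(mem_sort leq) e inE eqxx.
Qed.

Lemma fmin_le (E : {fset nat}) z : z \in E -> fmin E <= z.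
Proof.
rewrite /fmin /enum_inc -(mem_sort leq).
have := sort_sorted leq_total E.
case: (sort leq E) => [|a l] //= hp.
rewrite inE => /orP [/eqP -> //|hz].
have := order_path_min leq_trans hp => /allP; exact.
Qed.

Lemma enum_inc_map (f : nat -> nat) (A : {fset nat}) :
  {in A &, forall x y, x < y -> f x < f y} ->
  enum_inc [fset f x | x in A] = map f (enum_inc A).
Proof.
move=> hf.
have hs : sorted ltn (enum_inc A).
  by rewrite ltn_sorted_uniq_leq sort_uniq fset_uniq sort_sorted //; exact: leq_total.
have hs' : sorted ltn (map f (enum_inc A)).
  apply: (homo_sorted_in (P := mem A) (e := ltn)) => //.
  by apply/allP => x /=; rewrite mem_sort.
apply: (sorted_eq leq_trans anti_leq).
  exact: (sort_sorted leq_total).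
  by move: hs'; rewrite ltn_sorted_uniq_leq => /andP [].
apply: uniq_perm.
- by rewrite sort_uniq fset_uniq.
- by move: hs'; rewrite ltn_sorted_uniq_leq => /andP [].
move=> y; rewrite mem_sort; apply/imfsetP/mapP => -[x hx ->]; exists x => //.
  by rewrite mem_sort.
by move: hx; rewrite mem_sort.
Qed.

Lemma spread_lemma (G : set_family) (hG : regular G) (M A : {fset nat}) :
  G M -> (forall a, a \in A -> exists2 m, m \in M & m <= a) ->
  (forall a b, a \in A -> b \in A -> a < b -> exists2 m, m \in M & a < m <= b) ->
  G A.
Proof.
case: hG => hher [hspr _] hM hlow hbet.
pose p x := \max_(m <- M | m <= x) m.
have pge : forall x m, m \in M -> m <= x -> m <= p x.
  by move=> x m hm hmx; apply: (leq_bigmax_seq (F := id)).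
have ple : forall x, p x <= x.
  by move=> x; apply/bigmax_leqP_seq.
have pin : forall x, (exists2 m, m \in M & m <= x) -> p x \in M.
  move=> x [m hm hmx].
  have : p x = 0 \/ p x \in M.
    rewrite /p big_seq_cond; apply: (big_ind (fun v => v = 0 \/ v \in M)) => //.
    - by left.
    - by move=> v w hv hw; rewrite /maxn; case: ifP.
    - by move=> i /andP [hi _]; right.
  case=> // h0; have := pge x m hm hmx; rewrite h0 leqn0 => /eqP <-; exact hm.
have pmono : {in A &, forall x y, x < y -> p x < p y}.
  move=> x y hx hy hxy; have [m hm /andP [h1 h2]] := hbet x y hx hy hxy.
  exact: (leq_ltn_trans (ple x) (leq_trans h1 (pge y m hm h2))).
have hE := enum_inc_map p A pmono.
apply: (hspr [fset p x | x in A]).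
- apply: (hher M) => //; apply/fsubsetP => y /imfsetP [x /= hx ->].
  by apply: pin; apply: hlow.
- have := congr1 size hE; rewrite size_map /enum_inc !size_sort => ->.
  by [].
- move=> i; have := congr1 size hE; rewrite size_map /enum_inc !size_sort => -> hi.
  rewrite -/(enum_inc _) hE.
  rewrite (nth_map 0) ?ple //.
  by rewrite /enum_inc size_sort.
Qed.

Lemma succ_cmp (u : seq {fset nat}) (E E' : {fset nat}) : successive u -> E \in u -> E' \in u -> E != E' ->
  fset_lt E E' \/ fset_lt E' E.
Proof.
case=> _ hu hE hE' hne.
have hi : index E u < size u by rewrite index_mem.
have hj : index E' u < size u by rewrite index_mem.
case: (ltngtP (index E u) (index E' u)) => h.
- left; have := hu _ _ (introT andP (conj h hj)); by rewrite !nth_index.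
- right; have := hu _ _ (introT andP (conj h hi)); by rewrite !nth_index.
- by move: hne; rewrite -(nth_index fset0 hE) h nth_index ?eqxx.
Qed.

Lemma minsP (u : seq {fset nat}) (x : nat) : reflect (exists2 E, E \in u & x = fmin E) (x \in mins u).
Proof.
rewrite /mins; apply: (iffP idP).
- by move=> /imfsetP [y /= /mapP [E hE ->] ->]; exists E.
- by move=> [E hE ->]; apply/imfsetP; exists (fmin E) => //=; apply/mapP; exists E.
Qed.

Lemma bigunionP (u : seq {fset nat}) (x : nat) : reflect (exists2 E, E \in u & x \in E) (x \in bigunion u).
Proof.
rewrite /bigunion; apply: (iffP (bigfcupP _ _ _ _)).
- by move=> [E /andP [hE _] hx]; exists E.
- by move=> [E hE hx]; exists E => //; rewrite hE.
Qed.

Local Close Scope fset_scope.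

Theorem lemma2 (G H : set_family) (hG : regular G) (hH : regular H)
  (s : seq {fset nat}) (hs : successive s)
  (hU : compose G H (bigunion s))
  (hnot : forall E, E \in s -> ~ H E) :
  G (mins s).
Proof.
case: hU => t [hHt [[hst hGt] hUt]].
apply: (spread_lemma G hG (mins t) (mins s) hGt).
- move=> a /minsP [F hF ->].
  have hF0 : F != fset0 by case: hs => h _; exact: h.
  have : fmin F \in bigunion t by rewrite -hUt; apply/bigunionP; exists F => //; exact: fmin_mem.
  move=> /bigunionP [E hE ha]; exists (fmin E); first by apply/minsP; exists E.
  exact: fmin_le.
- move=> a b /minsP [F hF ->] /minsP [F' hF' ->] hab.
  have hF0 : F != fset0 by case: hs => h _; exact: h.
  have hF0' : F' != fset0 by case: hs => h _; exact: h.
  have hzF : forall z, z \in F -> z < fmin F'.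
    move=> z hz.
    have hne : F != F' by apply/eqP => eFF; move: hab; rewrite eFF ltnn.
    case: (succ_cmp _ _ _ hs hF hF' hne) => [[_ [_ h]]|[_ [_ h]]].
    + by apply: h => //; exact: fmin_mem.
    + have := h _ _ (fmin_mem _ hF0') (fmin_mem _ hF0); by rewrite ltnNge (ltnW hab).
  have : fmin F \in bigunion t by rewrite -hUt; apply/bigunionP; exists F => //; exact: fmin_mem.
  move=> /bigunionP [E hE ha].
  have [z hzFF hzE] : exists2 z, z \in F & z \notin E.
    case: (boolP (fsubset F E)) => hsub.
    - exfalso; apply: (hnot F hF); case: hH => hh _; exact: hh E F hsub (hHt E hE).
    - by move/fsubsetPn: hsub => [z h1 h2]; exists z.
  have : z \in bigunion t by rewrite -hUt; apply/bigunionP; exists F => //.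
  move=> /bigunionP [E' hE' hzE'].
  have hne : E != E' by apply/eqP => eE; move: hzE; rewrite eE hzE'.
  case: (succ_cmp _ _ _ hst hE hE' hne) => [[hE0 [hE0' h]]|[_ [_ h]]].
  + exists (fmin E'); first by apply/minsP; exists E'.
    rewrite (h _ _ ha (fmin_mem _ hE0')) /=.
    exact: leq_trans (fmin_le _ _ hzE') (ltnW (hzF z hzFF)).
  + have := h _ _ hzE' ha; by rewrite ltnNge (fmin_le _ _ hzFF).
Qed.
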